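(* Let $T:F\to E$ be a positive linear operator between Archimedean vector lattices, and assume that $F$ or $E$ has the $\sigma$-property. If $H$ is a sublattice of $F$ such that $T|_{H}$ is $\sigma$-order continuous, then $T|_{\overline{H}^{1}}$ and $T|_{\overline{H}}$ are $\sigma$-order continuous, where $\overline{H}^1$ and $\overline H$ are the adherence and the closure of $H$ with respect to the uniform convergence on $F$.
   Context: For $e\in F_+$, $F_e=\bigcup_{\lambda\ge0}\lambda[-e,e]$ with norm $\|f\|_e=\inf\{\lambda\ge0:|f|\le\lambda e\}$. A net $(f_\alpha)$ converges uniformly to $f$ if there is $e\in F_+$ with $f\in F_e$ and, for every $\varepsilon>0$, eventually $\|f_\alpha-f\|_e\le\varepsilon$ (in particular $f_\alpha\in F_e$). The (uniform) adherence $\overline{H}^1$ is the set of uniform limits of nets in $H$; a set is closed if it equals its adherence; $\overline H$ is the intersection of all closed sets containing $H$. A vector lattice has the $\sigma$-property if every countable subset is contained in a principal ideal $F_e$. For a sublattice $G\subset F$, $T|_G$ is $\sigma$-order continuous if for every sequence $(g_n)\subset G$ that is decreasing with infimum $0$ in $G$, the sequence $(Tg_n)$ decreases to $0_E$ (infimum $0$ in $E$). *)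

(* Defs.v *)
From HB Require Import structures.
From mathcomp Require Import all_boot all_order all_algebra.
From mathcomp Require Import boolp classical_sets reals.
Set Implicit Arguments. Unset Strict Implicit. Unset Printing Implicit Defensive.
Import Order.TTheory GRing.Theory Num.Theory.
Local Open Scope ring_scope.
Local Open Scope classical_set_scope.

Definition is_sup {V : Type} (le : V -> V -> Prop) (x y s : V) : Prop :=
  [/\ le x s, le y s & forall u, le x u -> le y u -> le s u].

Definition is_inf {V : Type} (le : V -> V -> Prop) (x y s : V) : Prop :=
  [/\ le s x, le s y & forall u, le u x -> le u y -> le u s].

Definition vector_lattice (R : realType) (V : lmodType R)
  (le : V -> V -> Prop) : Prop :=
  (forall x, le x x) /\
  (forall x y, le x y -> le y x -> x = y) /\
  (forall x y z, le x y -> le y z -> le x z) /\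
  (forall x y z, le x y -> le (x + z) (y + z)) /\
  (forall (a : R) x y, 0 <= a -> le x y -> le (a *: x) (a *: y)) /\
  (forall x y, exists s, is_sup le x y s).

Definition archimedean (R : realType) (V : lmodType R)
  (le : V -> V -> Prop) : Prop :=
  forall x y : V, le 0 x -> (forall n : nat, le (n%:R *: x) y) -> x = 0.

Definition abs_le (R : realType) (V : lmodType R) (le : V -> V -> Prop)
  (f g : V) : Prop :=
  forall s, is_sup le f (- f) s -> le s g.

Definition in_ideal (R : realType) (V : lmodType R) (le : V -> V -> Prop)
  (e f : V) : Prop :=
  exists lam : R, 0 <= lam /\ abs_le le f (lam *: e).

Definition enorm (R : realType) (V : lmodType R) (le : V -> V -> Prop)
  (e f : V) : R :=
  inf [set lam : R | 0 <= lam /\ abs_le le f (lam *: e)].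

Definition sigma_property (R : realType) (V : lmodType R)
  (le : V -> V -> Prop) : Prop :=
  forall u : nat -> V, exists e, le 0 e /\ forall n, in_ideal le e (u n).

Definition directed (I : Type) (leI : I -> I -> Prop) : Prop :=
  [/\ inhabited I, (forall i, leI i i),
      (forall i j k, leI i j -> leI j k -> leI i k)
    & (forall i j, exists k, leI i k /\ leI j k)].

Definition uconv (R : realType) (V : lmodType R) (le : V -> V -> Prop)
  (I : Type) (leI : I -> I -> Prop) (x : I -> V) (f : V) : Prop :=
  exists e : V, [/\ le 0 e, in_ideal le e f &
    forall eps : R, 0 < eps -> exists i0 : I, forall i, leI i0 i ->
      in_ideal le e (x i - f) /\ enorm le e (x i - f) <= eps].

Definition adherence (R : realType) (V : lmodType R) (le : V -> V -> Prop)
  (H : set V) : set V :=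
  [set f | exists (I : Type) (leI : I -> I -> Prop) (x : I -> V),
      [/\ directed leI, (forall i, H (x i)) & uconv le leI x f]].

Definition uclosed (R : realType) (V : lmodType R) (le : V -> V -> Prop)
  (S : set V) : Prop := adherence le S = S.

Definition uclosure (R : realType) (V : lmodType R) (le : V -> V -> Prop)
  (H : set V) : set V :=
  [set f | forall S : set V, H `<=` S -> uclosed le S -> S f].

Definition vector_sublattice (R : realType) (V : lmodType R)
  (le : V -> V -> Prop) (G : set V) : Prop :=
  [/\ G 0, (forall x y, G x -> G y -> G (x + y)),
      (forall (a : R) x, G x -> G (a *: x))
    & (forall x y s, G x -> G y -> is_sup le x y s -> G s)].

Definition sigma_oc (R : realType) (F E : lmodType R)
  (leF : F -> F -> Prop) (leE : E -> E -> Prop) (T : F -> E) (G : set F)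
  : Prop :=
  forall g : nat -> F,
    (forall n, G (g n)) ->
    (forall n, leF (g n.+1) (g n)) ->
    (forall n, leF 0 (g n)) ->
    (forall u, G u -> (forall n, leF u (g n)) -> leF u 0) ->
    [/\ (forall n, leE (T (g n.+1)) (T (g n))),
        (forall n, leE 0 (T (g n)))
      & (forall u, (forall n, leE u (T (g n))) -> leE u 0)].

Definition positive_op (R : realType) (F E : lmodType R)
  (leF : F -> F -> Prop) (leE : E -> E -> Prop) (T : F -> E) : Prop :=
  forall x, leF 0 x -> leE 0 (T x).

(* Main.v *)
Require Import Defs.
From mathcomp Require Import all_boot all_order all_algebra.
From mathcomp Require Import boolp classical_sets reals.
From mathcomp Require Import ring lra.
Set Implicit Arguments. Unset Strict Implicit. Unset Printing Implicit Defensive.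
Import Order.TTheory GRing.Theory Num.Theory.
Local Open Scope ring_scope.
Local Open Scope classical_set_scope.



Section VL.
Variables (R : realType) (V : lmodType R) (le : V -> V -> Prop).
Hypothesis vl : vector_lattice le.

Lemma leR x : le x x. Proof. by case: vl. Qed.
Lemma leA x y : le x y -> le y x -> x = y.
Proof. by case: vl => _ [h _]; apply: h. Qed.
Lemma leT x y z : le x y -> le y z -> le x z.
Proof. by case: vl => _ [_ [h _]]; apply: h. Qed.
Lemma leD x y z : le x y -> le (x + z) (y + z).
Proof. by case: vl => _ [_ [_ [h _]]]; apply: h. Qed.
Lemma leZ (a : R) x y : 0 <= a -> le x y -> le (a *: x) (a *: y).
Proof. by case: vl => _ [_ [_ [_ [h _]]]]; apply: h. Qed.
Lemma supE x y : exists s, is_sup le x y s.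
Proof. by case: vl => _ [_ [_ [_ [_ h]]]]; apply: h. Qed.

Definition vsup x y : V := proj1_sig (cid (supE x y)).
Lemma vsupP x y : is_sup le x y (vsup x y).
Proof. exact: (proj2_sig (cid (supE x y))). Qed.
Lemma sup_l x y : le x (vsup x y). Proof. by case: (vsupP x y). Qed.
Lemma sup_r x y : le y (vsup x y). Proof. by case: (vsupP x y). Qed.
Lemma sup_lub x y z : le x z -> le y z -> le (vsup x y) z.
Proof. by case: (vsupP x y) => _ _ h; apply: h. Qed.

Lemma leDl x y z : le x y -> le (z + x) (z + y).
Proof. by rewrite ![z + _]addrC; apply: leD. Qed.
Lemma leDD x y x' y' : le x y -> le x' y' -> le (x + x') (y + y').
Proof. move=> h h'; apply: leT (leD x' h) (leDl y h'). Qed.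
Lemma le_sub x y : le x y -> le 0 (y - x).
Proof. by move=> h; have := leD (- x) h; rewrite subrr. Qed.
Lemma sub_le x y : le 0 (y - x) -> le x y.
Proof. by move=> h; have := leD x h; rewrite add0r subrK. Qed.
Lemma leN x y : le x y -> le (- y) (- x).
Proof. by move=> h; apply: sub_le; rewrite opprK addrC; apply: le_sub. Qed.
Lemma le0Z e (a : R) : le 0 e -> 0 <= a -> le 0 (a *: e).
Proof. by move=> e0 a0; have := leZ a0 e0; rewrite scaler0. Qed.
Lemma leZr e (a b : R) : le 0 e -> a <= b -> le (a *: e) (b *: e).
Proof.
move=> e0 ab; apply: sub_le; rewrite -scalerBl; apply: le0Z => //.
by rewrite subr_ge0.
Qed.

Definition vinf x y := - vsup (- x) (- y).
Lemma inf_l x y : le (vinf x y) x.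
Proof. by rewrite /vinf -[x in le _ x]opprK; apply: leN; apply: sup_l. Qed.
Lemma inf_r x y : le (vinf x y) y.
Proof. by rewrite /vinf -[y in le _ y]opprK; apply: leN; apply: sup_r. Qed.
Lemma inf_glb x y z : le z x -> le z y -> le z (vinf x y).
Proof.
move=> h1 h2; rewrite /vinf -[z]opprK; apply: leN.
by apply: sup_lub; apply: leN.
Qed.

Definition pos x := vsup x 0.
Lemma pos_ge x : le x (pos x). Proof. exact: sup_l. Qed.
Lemma pos_ge0 x : le 0 (pos x). Proof. exact: sup_r. Qed.
Lemma pos_lub x z : le x z -> le 0 z -> le (pos x) z.
Proof. exact: sup_lub. Qed.
Lemma pos_id x : le 0 x -> pos x = x.
Proof. move=> h; apply: leA; last exact: pos_ge.
by apply: pos_lub => //; apply: leR. Qed.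
Lemma pos_mono x y : le x y -> le (pos x) (pos y).
Proof. by move=> h; apply: pos_lub; [apply: leT h (pos_ge y)|apply: pos_ge0]. Qed.

Lemma sum_ge0 (x : nat -> V) n : (forall k, le 0 (x k)) -> le 0 (\sum_(k < n) x k).
Proof.
move=> h; elim: n => [|n IH].
  by rewrite big_ord0; exact: leR.
rewrite big_ord_recr /= -[X in le X _](addr0 0); apply: leDD; [exact: IH|exact: h].
Qed.

Lemma le_sum_term (x : nat -> V) n i : (forall k, le 0 (x k)) -> (i < n)%N ->
  le (x i) (\sum_(k < n) x k).
Proof.
move=> h; elim: n => [//|n IH] lt; rewrite big_ord_recr /=.
case: (ltngtP i n) => [lin|nli|->].
- by rewrite -[x i]addr0; apply: leDD; [apply: IH|apply: h].
- by move: lt; rewrite ltnS leqNgt nli.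
- by rewrite -[X in le X _]add0r; apply: leD; apply: sum_ge0.
Qed.

Lemma sum_le_scale (x : nat -> V) (c : nat -> R) e n :
  (forall k, le (x k) (c k *: e)) ->
  le (\sum_(k < n) x k) ((\sum_(k < n) c k) *: e).
Proof.
move=> h; elim: n => [|n IH]; first by rewrite !big_ord0 scale0r; apply: leR.
by rewrite !big_ord_recr /= scalerDl; apply: leDD.
Qed.

Lemma abs_le_both v g : abs_le le v g -> le v g /\ le (- v) g.
Proof.
move=> h; have := h _ (vsupP v (- v)) => hs.
by split; apply: leT hs; [apply: sup_l|apply: sup_r].
Qed.

Hypothesis ar : archimedean le.

Lemma arch_le0 e y : le 0 e -> (forall r : R, 0 < r -> le y (r *: e)) -> le y 0.
Proof.
move=> e0 h.
have hp r : 0 < r -> le (pos y) (r *: e).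
  by move=> r0; apply: pos_lub; [apply: h|apply: le0Z => //; apply: ltW].
suff py : pos y = 0 by rewrite -py; apply: pos_ge.
apply: (ar (pos_ge0 y)) => n.
have n0 : (0 : R) < n.+1%:R by rewrite ltr0Sn.
have := hp (n.+1%:R^-1) ltac:(by rewrite invr_gt0) => /(leZ (ltW n0)).
rewrite scalerA mulfV ?gt_eqF // scale1r => hn.
apply: leT hn; apply: leZr; first exact: pos_ge0.
by rewrite ler_nat.
Qed.

End VL.



Definition pnext (p : nat * nat) : nat * nat :=
  if p.1 is m.+1 then (m, p.2.+1) else (p.2.+1, 0%N).
Definition pe (t : nat) : nat * nat := iter t pnext (0%N, 0%N).

Lemma pe_bound t : ((pe t).1 + (pe t).2 <= t)%N.
Proof.
elim: t => [//|t IH]; rewrite /pe iterS -/(pe t) /pnext.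
case: (pe t) IH => [[|m] j] /= IH.
  by rewrite addn0 ltnS.
by rewrite addnS -addSn ltnW // ltnS.
Qed.

Lemma pe_surj m j : exists t, pe t = (m, j).
Proof.
have step d t : pe t = (d, 0%N) -> forall i, (i <= d)%N -> exists t', pe t' = ((d - i)%N, i).
  move=> hd; elim=> [|i IH] lt; first by exists t; rewrite subn0.
  have [t' ht'] := IH (ltnW lt).
  exists t'.+1; rewrite /pe iterS -/(pe t') ht' /pnext /=.
  by case E: (d - i)%N => [|k] /=; [move/eqP: E; rewrite subn_eq0 leqNgt lt | rewrite subnS E].
have base d : exists t, pe t = (d, 0%N).
  elim: d => [|d [t ht]]; first by exists 0%N.
  have [t' ht'] := step d t ht d (leqnn d).
  by exists t'.+1; rewrite /pe iterS -/(pe t') ht' subnn.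
have [t ht] := base (m + j)%N.
have [t' ht'] := step _ _ ht j (leq_addl m j).
by exists t'; rewrite ht' addnK.
Qed.

Lemma pe1 t : ((pe t).1 <= t)%N.
Proof. exact: leq_trans (leq_addr _ _) (pe_bound t). Qed.
Lemma pe2 t : ((pe t).2 <= t)%N.
Proof. exact: leq_trans (leq_addl _ _) (pe_bound t). Qed.

Section Reals.
Variable R : realType.
Notation q := ((2 : R)^-1).

Lemma q_gt0 : 0 < q. Proof. by rewrite invr_gt0. Qed.
Lemma q_le1 : q <= 1. Proof. by rewrite invf_le1 //; lra. Qed.
Lemma qn_ge0 n : 0 <= q ^+ n. Proof. by rewrite exprn_ge0 // ltW // q_gt0. Qed.
Lemma qn_gt0 n : 0 < q ^+ n. Proof. by rewrite exprn_gt0 // q_gt0. Qed.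

Lemma geo n : \sum_(k < n) q ^+ k.+1 = 1 - q ^+ n.
Proof.
elim: n => [|n IH]; first by rewrite big_ord0 expr0 subrr.
rewrite big_ord_recr /= IH exprS.
have -> : q ^+ n = q * q ^+ n + q * q ^+ n.
  have hq : q + q = 1 by field.
  by rewrite -mulrDl hq mul1r.
lra.
Qed.

Lemma geo_le1 n : \sum_(k < n) q ^+ k.+1 <= 1.
Proof. by rewrite geo; have := qn_ge0 n; lra. Qed.

Lemma qpow_small (r : R) : 0 < r -> exists K, q ^+ K <= r.
Proof.
move=> r0.
have [n hn] : exists n : nat, r^-1 < n%:R.
  exists (Num.Def.archi_bound (r^-1)); apply: archi_boundP.
  by rewrite invr_ge0 ltW.
exists n.
have n0 : 0 < (n%:R : R) by apply: le_lt_trans hn; rewrite invr_ge0 ltW.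
have h2 : (n%:R : R) <= 2 ^+ n.
  by rewrite -natrX ler_nat; apply: ltnW; apply: ltn_expl.
rewrite exprVn -[r]invrK lef_pV2 ?posrE ?exprn_gt0 ?invr_gt0 //.
by apply: le_trans h2; apply: ltW.
Qed.

Lemma qpow_mono m n : (m <= n)%N -> q ^+ n <= q ^+ m.
Proof.
move=> mn; rewrite -(subnK mn) exprD.
have := qn_ge0 m; have := qn_ge0 (n - m); have : q ^+ (n - m) <= 1 by rewrite exprn_ile1 // ?q_le1 // ltW // q_gt0.
nra.
Qed.

End Reals.



Lemma frac_le (R : realType) (c l : R) : 0 <= c -> 0 <= l -> c / (l + 1) * l <= c.
Proof.
move=> c0 l0.
have h : c / (l + 1) * l = c - c / (l + 1) by field; lra.
by rewrite h; have := divr_ge0 c0 (ltW (ltr_wpDl l0 ltr01)); lra.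
Qed.

Section Adh.
Variables (R : realType) (F : lmodType R) (leF : F -> F -> Prop).
Hypothesis vlF : vector_lattice leF.



Lemma abs_ge0 f : leF 0 (vsup vlF f (- f)).
Proof.
have h2 : leF 0 (vsup vlF f (- f) + vsup vlF f (- f)).
  by rewrite -(subrr f); apply: (leDD vlF); [exact: sup_l|exact: sup_r].
have q0 : (0 : R) <= 2^-1 by rewrite invr_ge0.
have := leZ vlF q0 h2.
rewrite scaler0 scalerDr -scalerDl.
have -> : (2 : R)^-1 + 2^-1 = 1 by field.
by rewrite scale1r.
Qed.

Lemma adh_const (S : set F) f : S f -> adherence leF S f.
Proof.
move=> Sf; exists unit, (fun _ _ => True), (fun _ => f); split.
- by split; [constructor; exact: tt|done|done| move=> _ _; exists tt].
- by [].
exists (vsup vlF f (- f)); split; first exact: abs_ge0.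
  exists 1; split => //; move=> s [h1 h2 h3]; rewrite scale1r.
  by apply: h3; [exact: sup_l|exact: sup_r].
move=> eps eps0; exists tt => _ _; rewrite subrr.
have hz : abs_le leF 0 (0 *: vsup vlF f (- f)).
  by move=> s [h1 h2 h3]; rewrite scale0r; apply: h3; rewrite ?oppr0; exact: leR.
split; first by exists 0; split.
rewrite /enorm.
set Sl := [set lam : R | _].
have S0 : Sl 0 by split.
have hl : has_lbound Sl by exists 0 => y [].
have := ge_inf hl S0.
by move=> h; apply: le_trans h (ltW eps0).
Qed.

Lemma enorm_lt e v (t : R) : in_ideal leF e v -> enorm leF e v < t ->
  exists lam, [/\ 0 <= lam, lam < t & abs_le leF v (lam *: e)].
Proof.
move=> [l hl] hlt; have [y [y0 hy] ylt] := inf_lt (ex_intro _ l hl) hlt.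
by exists y.
Qed.

End Adh.

Lemma pos_mono_op (R : realType) (F E : lmodType R) (leF : F -> F -> Prop) (leE : E -> E -> Prop)
  (vlF : vector_lattice leF) (vlE : vector_lattice leE) (T : {linear F -> E}) :
  positive_op leF leE T -> forall x y, leF x y -> leE (T x) (T y).
Proof.
move=> Tp x y h; apply: (sub_le vlE); rewrite -linearB; apply: Tp.
have := le_sub vlF h. move=> hh. exact hh.
Qed.



Section Gen.
Variables (R : realType) (F E W : lmodType R).
Variables (leF : F -> F -> Prop) (leE : E -> E -> Prop) (leW : W -> W -> Prop).
Hypotheses (vlF : vector_lattice leF) (vlE : vector_lattice leE) (vlW : vector_lattice leW).
Hypotheses (archF : archimedean leF) (archE : archimedean leE).
Hypothesis sigW : sigma_property leW.
Variables (T : {linear F -> E}) (phi : {linear F -> W}) (psi : {linear W -> E}).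
Hypotheses (Tpos : positive_op leF leE T) (phipos : positive_op leF leW phi)
  (psipos : positive_op leW leE psi).
Hypothesis hT : forall x, psi (phi x) = T x.
Variable H : set F.
Hypotheses (Hsub : vector_sublattice leF H) (Hoc : sigma_oc leF leE T H).

Notation q := ((2 : R)^-1).
Notation posF := (pos vlF).

Lemma H_pos x : H x -> H (posF x).
Proof. by case: Hsub => H0 _ _ Hs hx; apply: Hs hx H0 (vsupP _ _ _). Qed.
Lemma H_opp x : H x -> H (- x).
Proof. by case: Hsub => _ _ Hz _ hx; rewrite -scaleN1r; apply: Hz. Qed.
Lemma H_inf x y : H x -> H y -> H (vinf vlF x y).
Proof.
move=> hx hy; apply: H_opp; case: Hsub => _ _ _ Hs.
by apply: Hs (H_opp hx) (H_opp hy) (vsupP _ _ _).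
Qed.

Definition Dg (f : F) : Prop := exists e', leW 0 e' /\ forall eps : R, 0 < eps ->
  exists a : nat -> F, [/\ (forall j, H (a j)),
    (forall w, (forall j, leF w (posF (a j))) -> leF w (posF f)) &
    forall n, exists C, [/\ leF 0 C, (forall j, (j <= n)%N -> leF (f - C) (a j))
       & leW (phi C) (eps *: e')]].

Lemma H_D : H `<=` Dg.
Proof.
move=> f Hf; rewrite /Dg; exists 0; split; first exact: leR.
move=> eps _; exists (fun _ => f); split; [move=> _; exact: Hf|move=> w; apply; exact: 0%N|].
move=> n; exists 0; split; first exact: leR.
  by move=> j _; rewrite subr0; exact: leR.
by rewrite linear0 scaler0; exact: leR.
Qed.


Lemma main_oc (G : set F) : G `<=` Dg -> H `<=` G -> sigma_oc leF leE T G.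
Proof.
move=> GD HG g Gg gdec gpos ginf.
have Tm := pos_mono_op vlF vlE Tpos.
have psim := pos_mono_op vlW vlE psipos.
split; [by move=> n; apply: Tm; apply: gdec | by move=> n; apply: Tpos; apply: gpos|].
move=> u hu.
have gmono m t : (m <= t)%N -> leF (g t) (g m).
  move=> /subnK <-; elim: (t - m)%N => [|k IH]; first by rewrite add0n; exact: leR.
  by rewrite addSn; apply: (leT vlF (gdec _) IH).
have Dm : forall m, Dg (g m) by move=> m; apply: GD; apply: Gg.
rewrite /Dg in Dm.
have /choice [e' he'] := Dm.
have [e'' [e''0 he'']] := sigW e'.
have /choice [lam hlam] : forall m, exists l : R, 0 <= l /\ leW (e' m) (l *: e'').
  move=> m; have [l [l0 hl]] := he'' m; exists l; split => //.
  by have [] := abs_le_both vlW hl.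
have hsub : forall z, leE (u - z) 0 -> leE u z.
  by move=> z h; have := leD vlE z h; rewrite subrK add0r.
apply: (arch_le0 vlE archE (e := psi e'')); first by apply: psipos.
move=> eps eps0.
pose epsm m := eps * q ^+ m.+1 / (lam m + 1).
have lam0 m : 0 <= lam m by case: (hlam m).
have epsm0 m : 0 < epsm m.
  rewrite /epsm; apply: divr_gt0; first by apply: mulr_gt0 => //; apply: qn_gt0.
  by have := lam0 m; lra.
have := fun m => (he' m).2 _ (epsm0 m) => /choice [a ha].
have /choice [C hC] : forall p : nat * nat, exists C, [/\ leF 0 C,
    (forall j, (j <= p.2)%N -> leF (g p.1 - C) (a p.1 j)) &
    leW (phi C) (epsm p.1 *: e' p.1)].
  by move=> [m n]; case: (ha m) => _ _ h; exact: h n.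
pose b t := a (pe t).1 (pe t).2.
pose k := fix k t := if t is t'.+1 then vinf vlF (k t') (posF (b t)) else posF (b 0%N).
have kS t : k t.+1 = vinf vlF (k t) (posF (b t.+1)) by [].
have Hb t : H (b t) by rewrite /b; case: (ha (pe t).1) => h _ _; apply: h.
have Hk t : H (k t).
  elim: t => [|t IH]; first exact: H_pos.
  by rewrite kS; apply: (H_inf IH (H_pos (Hb _))).
have kdec t : leF (k t.+1) (k t) by rewrite kS; exact: inf_l.
have kpos t : leF 0 (k t).
  elim: t => [|t IH]; first exact: pos_ge0.
  by rewrite kS; apply: (inf_glb vlF IH); exact: pos_ge0.
have kb t : leF (k t) (posF (b t)).
  by case: t => [|t]; [exact: leR | rewrite kS; exact: inf_r].
have kglb t y : (forall s, (s <= t)%N -> leF y (posF (b s))) -> leF y (k t).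
  elim: t => [|t IH] h; first exact: h 0%N (leqnn 0).
  rewrite kS; apply: inf_glb; last exact: h _ (leqnn _).
  by apply: IH => s st; apply: h; apply: leqW.
have kinf w : H w -> (forall t, leF w (k t)) -> leF w 0.
  move=> Hw hw; apply: ginf (HG _ Hw) _ => m.
  have hm j : leF w (posF (a m j)).
    have [t ht] := pe_surj m j.
    have := leT vlF (hw t) (kb t).
    by rewrite /b ht.
  case: (ha m) => _ h _; have := h w hm.
  by rewrite pos_id.
have [_ _ Hk3] := Hoc Hk kdec kpos kinf.
apply: hsub; apply: Hk3 => t.
pose xs := fun m : nat => C (m, t).
have C0 p : leF 0 (C p) by case: (hC p).
have claim1 : leF (g t - \sum_(m < t.+1) xs m) (k t).
  apply: kglb => s st.
  have ms : ((pe s).1 <= t)%N := leq_trans (pe1 s) st.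
  have js : ((pe s).2 <= t)%N := leq_trans (pe2 s) st.
  apply: (leT vlF _ (pos_ge vlF _)).
  rewrite /b.
  have h1 : leF (g t - \sum_(m < t.+1) xs m) (g (pe s).1 - C ((pe s).1, t)).
    apply: (leDD vlF); first exact: gmono.
    apply: (leN vlF).
    have := le_sum_term vlF (x := xs) (n := t.+1) (i := (pe s).1) (fun p => C0 _).
    by rewrite ltnS => /(_ ms).
  apply: (leT vlF h1 _).
  by case: (hC ((pe s).1, t)) => _ /= h _; apply: h.
have claim2 : leE (T (\sum_(m < t.+1) xs m)) (eps *: psi e'').
  rewrite -hT linear_sum -linearZ; apply: psim.
  have hs : leW (\sum_(m < t.+1) phi (xs m))
      ((\sum_(m < t.+1) (epsm m * lam m)) *: e'').
    apply: (sum_le_scale vlW (x := fun m => phi (xs m)) (c := fun m => epsm m * lam m)) => m.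
    case: (hC (m, t)) => _ _ /= h.
    apply: (leT vlW h _).
    rewrite -scalerA; apply: (leZ vlW); first exact: ltW.
    by case: (hlam m).
  apply: (leT vlW hs _); apply: (leZr vlW e''0).
  apply: le_trans (_ : \sum_(m < t.+1) eps * q ^+ m.+1 <= eps).
    apply: ler_sum => m _; rewrite /epsm.
    apply: frac_le; last exact: lam0.
    by apply: mulr_ge0; [exact: ltW | exact: qn_ge0].
  by rewrite -mulr_sumr; have := geo_le1 R t.+1; nra.
have := leDD vlE (hu t) (leN vlE claim2).
rewrite -linearB => h; apply: (leT vlE h _).
exact: Tm claim1.
Qed.

Lemma qS_lt k : q ^+ k.+1 < q ^+ k.
Proof. by rewrite exprS; have := qn_gt0 R k; lra. Qed.

Lemma adh_D : adherence leF Dg `<=` Dg.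
Proof.
move=> f [I [leI [x [dir Dx [e [e0 ef conv]]]]]].
case: dir => _ ref _ _.
have hk k : exists i, exists l : R, [/\ 0 <= l, l < q ^+ k & abs_le leF (x i - f) (l *: e)].
  have [i0 hi0] := conv _ (qn_gt0 R k.+1).
  have [hid hno] := hi0 i0 (ref i0).
  have [l [l0 llt hl]] := enorm_lt hid (le_lt_trans hno (qS_lt k)).
  by exists i0, l.
have /choice [ik hik] := hk.
have /choice [l hl] := hik.
pose y k := x (ik k).
have Dy : forall k, Dg (y k) by move=> k; apply: Dx.
rewrite /Dg in Dy.
have /choice [e' he'] := Dy.
have [e'' [e''0 he'']] := sigW (fun n => if n is n'.+1 then e' n' else phi e).
have /choice [lam hlam] : forall n, exists l : R,
    0 <= l /\ leW (if n is n'.+1 then e' n' else phi e) (l *: e'').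
  move=> m; have [l' [l0 hl']] := he'' m; exists l'; split => //.
  by have [] := abs_le_both vlW hl'.
have lam0 m : 0 <= lam m by case: (hlam m).
have l0 k : 0 <= l k by case: (hl k).
have hyf k : leF (y k - f) (l k *: e) /\ leF (- (y k - f)) (l k *: e).
  by case: (hl k) => _ _ h; apply: (abs_le_both vlF h).
rewrite /Dg; exists e''; split => // eps eps0.
have [K hK] := qpow_small (r := eps / (4 * (lam 0%N + 1))) ltac:(by apply: divr_gt0 => //; have := lam0 0%N; lra).
pose epsk k := eps / 2 * q ^+ k.+1 / (lam (K + k).+1 + 1).
have epsk0 k : 0 < epsk k.
  rewrite /epsk; apply: divr_gt0; last by have := lam0 (K + k).+1; lra.
  by apply: mulr_gt0; [apply: divr_gt0 | apply: qn_gt0].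
have := fun k => (he' (K + k)%N).2 _ (epsk0 k) => /choice [a ha].
have /choice [C hC] : forall p : nat * nat, exists C, [/\ leF 0 C,
    (forall j, (j <= p.2)%N -> leF (y (K + p.1)%N - C) (a p.1 j)) &
    leW (phi C) (epsk p.1 *: e' (K + p.1)%N)].
  by move=> [m n]; case: (ha m) => _ _ h; exact: h n.
exists (fun t => a (pe t).1 (pe t).2); split.
- by move=> t; case: (ha (pe t).1) => h _ _; apply: h.
- move=> w hw.
  have hwk k : leF (w - posF f) (l (K + k)%N *: e).
    have h1 : forall j, leF w (posF (a k j)).
      by move=> j; have [t ht] := pe_surj k j; have := hw t; rewrite ht.
    have h2 : leF w (posF (y (K + k)%N)) by case: (ha k) => _ h _; apply: h.
    have h3 : leF (posF (y (K + k)%N)) (posF f + l (K + k)%N *: e).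
      apply: pos_lub.
        have := leD vlF f (hyf (K + k)%N).1; rewrite subrK [_ + f]addrC => h4.
        apply: (leT vlF h4); apply: (leD vlF); exact: pos_ge.
      rewrite -[X in leF X _](addr0 0); apply: (leDD vlF); first exact: pos_ge0.
      exact: le0Z.
    have := leD vlF (- posF f) (leT vlF h2 h3).
    by rewrite [posF f + _]addrC addrK.
  have : leF (w - posF f) 0.
    apply: (arch_le0 vlF archF e0) => r r0.
    have [k hk'] := qpow_small r0.
    apply: (leT vlF (hwk k)); apply: (leZr vlF e0).
    case: (hl (K + k)%N) => _ hlt _.
    apply: ltW; apply: lt_le_trans hlt _; apply: le_trans hk'.
    by apply: qpow_mono; apply: leq_addl.
  by move=> h; have := leD vlF (posF f) h; rewrite subrK add0r.
- move=> n.
  pose zs := fun k : nat => l (K + k)%N *: e + C (k, n).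
  have zs0 k : leF 0 (zs k).
    rewrite /zs -[X in leF X _](addr0 0); apply: (leDD vlF); first exact: le0Z.
    by case: (hC (k, n)).
  exists (\sum_(k < n.+1) zs k); split.
  + exact: sum_ge0.
  + move=> t tn.
    have ms : ((pe t).1 <= n)%N := leq_trans (pe1 t) tn.
    have js : ((pe t).2 <= n)%N := leq_trans (pe2 t) tn.
    set m := (pe t).1.
    have h1 : leF (zs m) (\sum_(k < n.+1) zs k).
      by apply: (le_sum_term vlF (x := zs)) => //; rewrite ltnS.
    have h2 : leF (f - \sum_(k < n.+1) zs k) (y (K + m)%N - C (m, n)).
      apply: (leT vlF (leDl vlF f (leN vlF h1))).
      rewrite /zs opprD addrA; apply: (leD vlF).
      apply: (sub_le vlF).
      have := le_sub vlF (hyf (K + m)%N).2.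
      by rewrite opprK opprB addrCA.
    apply: (leT vlF h2).
    by case: (hC (m, n)) => _ /= h _; apply: h.
  + rewrite linear_sum.
    have hs : leW (\sum_(k < n.+1) phi (zs k))
      ((\sum_(k < n.+1) (l (K + k)%N * lam 0%N + epsk k * lam (K + k).+1)) *: e'').
      apply: (sum_le_scale vlW (x := fun k => phi (zs k))
        (c := fun k => l (K + k)%N * lam 0%N + epsk k * lam (K + k).+1)) => k.
      rewrite /zs linearD linearZ scalerDl; apply: (leDD vlW).
        rewrite -scalerA; apply: (leZ vlW); first exact: l0.
        by case: (hlam 0%N).
      case: (hC (k, n)) => _ _ /= h; apply: (leT vlW h).
      rewrite -scalerA; apply: (leZ vlW); first exact: ltW.
      by case: (hlam (K + k).+1).
    apply: (leT vlW hs); apply: (leZr vlW e''0).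
    apply: le_trans (_ : \sum_(k < n.+1) eps * q ^+ k.+1 <= eps); last first.
      by rewrite -mulr_sumr; have := geo_le1 R n.+1; nra.
    apply: ler_sum => k _.
    have t2 : epsk k * lam (K + k).+1 <= eps / 2 * q ^+ k.+1.
      apply: frac_le; last exact: lam0.
      by apply: mulr_ge0; [apply: divr_ge0; lra | apply: qn_ge0].
    have t1 : l (K + k)%N * lam 0%N <= eps / 2 * q ^+ k.+1.
      have hlk : l (K + k)%N <= q ^+ K * q ^+ k.
        by rewrite -exprD; case: (hl (K + k)%N) => _ h _; apply: ltW.
      have hK' : q ^+ K * (4 * (lam 0%N + 1)) <= eps.
        by rewrite -ler_pdivlMr //; have := lam0 0%N; lra.
      have qk0 := qn_ge0 R k; have qK0 := qn_ge0 R K; have := lam0 0%N.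
      have l0' := l0 (K + k)%N.
      rewrite exprS.
      have : l (K + k)%N * lam 0%N <= q ^+ K * q ^+ k * lam 0%N by apply: ler_wpM2r.
      have : q ^+ K * q ^+ k * lam 0%N <= q ^+ K * q ^+ k * (lam 0%N + 1) by nra.
      have : q ^+ K * q ^+ k * (lam 0%N + 1) * 4 <= eps * q ^+ k by nra.
      have -> : eps / 2 * (q * q ^+ k) = eps * q ^+ k / 4 by field.
      lra.
    lra.
Qed.

Lemma D_adh : Dg `<=` adherence leF Dg.
Proof. by move=> f hf; apply: adh_const. Qed.

Lemma final_gen : sigma_oc leF leE T (adherence leF H) /\ sigma_oc leF leE T (uclosure leF H).
Proof.
split; apply: main_oc.
- move=> f [I [leI [x [d hx hu]]]]; apply: adh_D.
  by exists I, leI, x; split => // i; apply: H_D; apply: hx.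
- by move=> f Hf; apply: adh_const.
- move=> f hf; apply: hf; first exact: H_D.
  by rewrite /uclosed eqEsubset; split; [exact: adh_D | exact: D_adh].
- by move=> f Hf S HS _; apply: HS.
Qed.

End Gen.


Theorem theorem10p3 (R : realType) (F E : lmodType R)
  (leF : F -> F -> Prop) (leE : E -> E -> Prop)
  (vlF : vector_lattice leF) (vlE : vector_lattice leE)
  (archF : archimedean leF) (archE : archimedean leE)
  (sigma : sigma_property leF \/ sigma_property leE)
  (T : {linear F -> E}) (Tpos : positive_op leF leE T)
  (H : set F) (Hsub : vector_sublattice leF H)
  (Hoc : sigma_oc leF leE T H) :
  sigma_oc leF leE T (adherence leF H) /\ sigma_oc leF leE T (uclosure leF H).
Proof.
case: sigma => [sF|sE].
- exact: (@final_gen R F E F leF leE leF vlF vlE vlF archF archE sF T idfun T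
    Tpos Tpos (fun x => erefl) H Hsub Hoc).
- apply: (@final_gen R F E E leF leE leE vlF vlE vlE archF archE sE T T idfun
    Tpos _ (fun x => erefl) H Hsub Hoc).
  by move=> x.
Qed.
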